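(* Let $\Omega\subset\mathbb{R}^d$ be a bounded Lipschitz domain, $\beta>0$, $g:[0,\infty)\to[0,\infty)$ continuous and strictly increasing with $g(0)=0$, $0<\alpha\le1$, $\delta,M_1,M_2>0$, and $R:=\operatorname{diam}(\Omega)$. Let $\varrho=\varrho(\Omega,\delta,M_1,M_2,\alpha)>0$ be the radius of guaranteed local injectivity described in the context. Then there exists $\bar\varepsilon>0$ depending only on $d,\Omega,\delta,\alpha,M_1,M_2,g$ such that the following holds: if $y\in C^{1,\alpha}(\Omega;\mathbb{R}^d)$ satisfies $\det\nabla y\ge\delta$, $|\nabla y|\le M_1$ on $\Omega$, $\|\nabla y\|_{C^\alpha(\Omega)}\le M_2$, if $0<\varepsilon_2\le\bar\varepsilon$, and if $$|y(x_1)-y(x_2)|>R\varepsilon_2\quad\text{for all }x_1,x_2\in\Omega\text{ with }|x_1-x_2|>\tfrac{\varrho}{2},$$ then $E^{CN}_{\varepsilon_2}(y)=0$.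
   Context: For $\varepsilon_2>0$, $E^{CN}_{\varepsilon_2}(y):=\frac{1}{\varepsilon_2^\beta}\int_{\Omega\times\Omega}\frac{1}{\varepsilon_2^d}\big[g(|\tilde x-x|)-g\big(\tfrac{1}{\varepsilon_2}|y(\tilde x)-y(x)|\big)\big]^+\,d(x,\tilde x)$, with $[a]^+=\max\{0,a\}$. The radius $\varrho>0$ depends only on $\Omega,\delta,M_1,M_2,\alpha$ and has the property that every $y\in C^{1,\alpha}(\Omega;\mathbb{R}^d)$ satisfying the three bounds is injective on $B_\varrho(\bar x)\cap\Omega$ for every $\bar x\in\bar\Omega$, with $\frac12\frac{\delta}{M_1^{d-1}}|x_1-x_2|\le|y(x_1)-y(x_2)|\le M_1\sqrt{1+L^2}|x_1-x_2|$ there ($L$ bounding the local Lipschitz constants of $\partial\Omega$). *)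

(* Defs.v *)
From HB Require Import structures.
From mathcomp Require Import all_boot all_order all_algebra.
From mathcomp Require Import all_classical all_reals all_analysis.
Set Implicit Arguments. Unset Strict Implicit. Unset Printing Implicit Defensive.
Import Order.TTheory GRing.Theory Num.Theory.
Import numFieldNormedType.Exports.
Local Open Scope classical_set_scope.
Local Open Scope ring_scope.

Section Defs.
Variable R : realType.

Definition dotv (d : nat) (u v : 'cV[R]_d) : R := \sum_(i < d) u i 0 * v i 0.
Definition enorm (d : nat) (v : 'cV[R]_d) : R := Num.sqrt (dotv v v).
Definition fnorm (d : nat) (A : 'M[R]_d) : R :=
  Num.sqrt (\sum_(i < d) \sum_(j < d) A i j ^+ 2).

Definition hasDeriv (d : nat) (y : 'cV[R]_d -> 'cV[R]_d) (A : 'M[R]_d) (x : 'cV[R]_d) :=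
  forall eps : R, 0 < eps -> exists del : R, 0 < del /\
    forall h : 'cV[R]_d, enorm h < del ->
      enorm (y (x + h) - y x - A *m h) <= eps * enorm h.

Definition lipschitz_domain (d : nat) (Om : set 'cV[R]_d) (L : R) : Prop :=
  [/\ Om !=set0, open Om, connected Om,
      (exists M : R, forall x, Om x -> enorm x <= M) /\ 0 <= L &
      forall p, closure Om p -> ~ Om p ->
        exists r : R, exists e : 'cV[R]_d, exists gam : 'cV[R]_d -> R,
          [/\ 0 < r, enorm e = 1,
              (forall u v, `|gam u - gam v| <= L * enorm (u - v)) &
              forall x, enorm (x - p) < r ->
                (Om x <-> dotv e x < gam (x - dotv e x *: e))]].

Definition diam (d : nat) (Om : set 'cV[R]_d) : R :=
  sup [set r | exists x x', [/\ Om x, Om x' & r = enorm (x - x')]].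

(* ||F||_{C^alpha(Om)} := sup |F| + [F]_alpha <= M, written out *)
Definition holder_norm_le (d : nat) (Om : set 'cV[R]_d) (F : 'cV[R]_d -> 'M[R]_d)
    (alpha M : R) : Prop :=
  exists A B : R, [/\ 0 <= A, 0 <= B, A + B <= M /\
    (forall x, Om x -> fnorm (F x) <= A) &
    (forall x x', Om x -> Om x' -> fnorm (F x - F x') <= B * powR (enorm (x - x')) alpha)].

Definition C1alpha (d : nat) (Om : set 'cV[R]_d) (alpha : R)
    (y : 'cV[R]_d -> 'cV[R]_d) (Dy : 'cV[R]_d -> 'M[R]_d) : Prop :=
  (forall x, Om x -> hasDeriv y (Dy x) x) /\ exists M : R, holder_norm_le Om Dy alpha M.

Definition three_bounds (d : nat) (Om : set 'cV[R]_d) (alpha delta M1 M2 : R)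
    (Dy : 'cV[R]_d -> 'M[R]_d) : Prop :=
  [/\ (forall x, Om x -> delta <= \det (Dy x)),
      (forall x, Om x -> fnorm (Dy x) <= M1) &
      holder_norm_le Om Dy alpha M2].

Definition loc_inj_radius (d : nat) (Om : set 'cV[R]_d) (L alpha delta M1 M2 rho : R) : Prop :=
  forall (y : 'cV[R]_d -> 'cV[R]_d) (Dy : 'cV[R]_d -> 'M[R]_d),
    C1alpha Om alpha y Dy -> three_bounds Om alpha delta M1 M2 Dy ->
    forall xb, closure Om xb ->
      (forall x1 x2, Om x1 -> Om x2 -> enorm (x1 - xb) < rho -> enorm (x2 - xb) < rho ->
         y x1 = y x2 -> x1 = x2) /\
      (forall x1 x2, Om x1 -> Om x2 -> enorm (x1 - xb) < rho -> enorm (x2 - xb) < rho ->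
         (1 / 2) * (delta / M1 ^+ d.-1) * enorm (x1 - x2) <= enorm (y x1 - y x2) /\
         enorm (y x1 - y x2) <= M1 * Num.sqrt (1 + L ^+ 2) * enorm (x1 - x2)).

(* Lebesgue integral over R^n of a nonnegative function of the coordinates,
   computed as the iterated one-dimensional Lebesgue integral (Tonelli). *)
Fixpoint iint (n : nat) (F : (nat -> R) -> \bar R) : \bar R :=
  match n with
  | 0 => F (fun _ => 0)
  | n'.+1 => (\int[@lebesgue_measure R]_t
                 iint n' (fun v => F (fun k => if k is k'.+1 then v k' else t)))%E
  end.

Definition int_RdxRd (d : nat) (G : 'cV[R]_d -> 'cV[R]_d -> \bar R) : \bar R :=
  iint (d + d) (fun v => G (\col_(i < d) v i) (\col_(i < d) v (d + i)%N)).

Definition ECN (d : nat) (Om : set 'cV[R]_d) (g : R -> R) (beta eps2 : R)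
    (y : 'cV[R]_d -> 'cV[R]_d) : \bar R :=
  ((powR eps2 beta)^-1)%:E *
  int_RdxRd (fun x xt =>
    if `[< Om x /\ Om xt >] then
      ((eps2 ^+ d)^-1 * Num.max (g (enorm (xt - x)) - g (eps2^-1 * enorm (y xt - y x))) 0)%:E
    else 0%E).

End Defs.

(* Main.v *)
Require Import Defs.
From HB Require Import structures.
From mathcomp Require Import all_boot all_order all_algebra.
From mathcomp Require Import all_classical all_reals all_analysis.
From mathcomp Require Import lra.
Import Order.TTheory GRing.Theory Num.Theory.
Import numFieldNormedType.Exports.
Local Open Scope classical_set_scope.
Local Open Scope ring_scope.

Lemma enorm_ge0 {R : realType} {d : nat} (v : 'cV[R]_d) : 0 <= enorm v.
Proof. exact: sqrtr_ge0. Qed.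

Lemma dotv_ge0 {R : realType} {d : nat} (v : 'cV[R]_d) : 0 <= dotv v v.
Proof. rewrite /dotv; apply: sumr_ge0 => i _; exact: sqr_ge0. Qed.

Lemma enormB {R : realType} {d : nat} (x y : 'cV[R]_d) : enorm (x - y) = enorm (y - x).
Proof.
rewrite /enorm /dotv; congr Num.sqrt; apply: eq_bigr => i _.
by rewrite !mxE -mulrNN !opprB.
Qed.

Lemma dotvB_le {R : realType} {d : nat} (x y : 'cV[R]_d) :
  dotv (x - y) (x - y) <= 2 * dotv x x + 2 * dotv y y.
Proof.
rewrite /dotv !mulr_sumr -big_split /=; apply: ler_sum => i _.
rewrite !mxE; set a := x i 0; set b := y i 0.
have : 0 <= (a + b) * (a + b) by exact: sqr_ge0.
move=> h; nra.
Qed.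

Lemma iint0 {R : realType} n (F : (nat -> R) -> \bar R) :
  (forall v, F v = 0%E) -> iint n F = 0%E.
Proof.
elim: n F => [|n IH] F HF /=; first exact: HF.
have -> : (fun t => iint n (fun v => F (fun k => if k is k'.+1 then v k' else t)))
   = (fun _ => 0%E) by apply/funext => t; apply: IH => v; exact: HF.
exact: integral0.
Qed.

Theorem corollary3p7 (R : realType) (d : nat) (Om : set 'cV[R]_d) (L : R)
  (g : R -> R) (alpha delta M1 M2 rho : R) :
  lipschitz_domain Om L ->
  {within [set t : R | 0 <= t], continuous g} ->
  (forall s t : R, 0 <= s -> s < t -> g s < g t) ->
  (forall t : R, 0 <= t -> 0 <= g t) ->
  g 0 = 0 ->
  0 < alpha -> alpha <= 1 -> 0 < delta -> 0 < M1 -> 0 < M2 ->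
  0 < rho -> loc_inj_radius Om L alpha delta M1 M2 rho ->
  exists epsbar : R, 0 < epsbar /\
    forall (beta : R) (y : 'cV[R]_d -> 'cV[R]_d) (Dy : 'cV[R]_d -> 'M[R]_d) (eps2 : R),
      0 < beta ->
      C1alpha Om alpha y Dy ->
      three_bounds Om alpha delta M1 M2 Dy ->
      0 < eps2 -> eps2 <= epsbar ->
      (forall x1 x2, Om x1 -> Om x2 -> rho / 2 < enorm (x1 - x2) ->
         diam Om * eps2 < enorm (y x1 - y x2)) ->
      ECN Om g beta eps2 y = 0%E.
Proof.
move=> [_ _ _ [[M HM] _] _] _ gmono _ _ _ _ dpos M1pos _ rhopos Hinj.
exists ((1 / 2) * (delta / M1 ^+ d.-1)); split.
  apply: mulr_gt0; first by [].
  by apply: divr_gt0 => //; apply: exprn_gt0.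
move=> beta y Dy eps2 _ Hy Hb e2pos e2le Hfar.
have key : forall x xt, Om x -> Om xt -> eps2 * enorm (xt - x) <= enorm (y xt - y x).
  move=> x xt Ox Oxt.
  have [hfar|hnear] := ltrP (rho / 2) (enorm (xt - x)).
  - apply/ltW; apply: le_lt_trans (Hfar _ _ Oxt Ox hfar).
    rewrite mulrC; apply: ler_wpM2r; first exact: ltW.
    apply: sup_upper_bound; last by exists xt, x.
    split; first by exists (enorm (xt - x)); exists xt, x.
    exists (Num.sqrt (4 * (M * M))) => r [a [b [Oa Ob ->]]].
    rewrite /enorm; apply: ler_wsqrtr.
    have hM : forall z, Om z -> dotv z z <= M * M.
      move=> z Oz; have h0 := enorm_ge0 z; have h1 := HM z Oz.
      rewrite -(sqr_sqrtr (dotv_ge0 z)) -/(enorm z) expr2.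
      by apply: ler_pM.
    have := dotvB_le a b; have := hM a Oa; have := hM b Ob; lra.
  - have [H1 H2] := Hinj y Dy Hy Hb xt (subset_closure Oxt).
    have h0 : enorm (xt - xt) < rho.
      by rewrite subrr /enorm /dotv big1 ?sqrtr0 // => i _; rewrite mxE mul0r.
    have h1 : enorm (x - xt) < rho by rewrite enormB; lra.
    have [H _] := H2 xt x Oxt Ox h0 h1.
    apply: le_trans H; apply: ler_wpM2r; first exact: enorm_ge0.
    by rewrite mul1r in e2le *.
rewrite /ECN /int_RdxRd iint0 ?mule0 // => v.
case: asboolP => [[Ox Oxt]|] //.
set x := \col_(i < d) v i; set xt := \col_(i < d) v (d + i)%N.
have K := key _ _ Ox Oxt.
have hle : g (enorm (xt - x)) <= g (eps2^-1 * enorm (y xt - y x)).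
  have ha := enorm_ge0 (xt - x).
  have hb : enorm (xt - x) <= eps2^-1 * enorm (y xt - y x).
    by rewrite ler_pdivlMl.
  move: hb; rewrite le_eqVlt => /orP [/eqP -> //|hb].
  exact/ltW/gmono.
rewrite /Num.max; case: ltP => [_|h0]; first by rewrite mulr0.
have -> : g (enorm (xt - x)) - g (eps2^-1 * enorm (y xt - y x)) = 0 by lra.
by rewrite mulr0.
Qed.
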